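(* Let $\Gamma_1,\Gamma_2$ be propositional theories over $\mathcal L$ and $A^+,A^-$ sets of atoms. Then $\Gamma_1$ and $\Gamma_2$ are relativized hyperequivalent w.r.t. $A^+$ and $A^-$ if and only if $E^{A^+}_{A^-}(\Gamma_1)=E^{A^+}_{A^-}(\Gamma_2)$.
   Context: Formulas are built from atoms and $\bot$ with $\wedge,\vee,\to$; $\neg\phi$ abbreviates $\phi\to\bot$. Let $\mathcal L^*=\mathcal L\cup A^+\cup A^-$; all HT-interpretations are over $\mathcal L^*$, i.e. pairs $(X,Y)$ with $X\subseteq Y\subseteq\mathcal L^*$, total if $X=Y$. HT-satisfaction: $(X,Y)\models a$ iff $a\in X$; $(X,Y)\not\models\bot$; $\wedge,\vee$ componentwise; $(X,Y)\models\phi\to\psi$ iff (i) $(X,Y)\not\models\phi$ or $(X,Y)\models\psi$, and (ii) $Y\models\phi\to\psi$ classically. $Y$ is an answer set of $\Gamma$ iff $(Y,Y)\models\Gamma$ and $(X,Y)\not\models\Gamma$ for all $X\subsetneq Y$. Polarity of occurrences is defined recursively: the occurrence of $\phi$ in itself is positive; occurrences of $\psi_1,\psi_2$ in a positive (resp. negative) occurrence of $\psi_1\wedge\psi_2$ or $\psi_1\vee\psi_2$ are positive (resp. negative); in an occurrence of $\psi_1\to\psi_2$, $\psi_1$ is negative and $\psi_2$ positive, and if that occurrence is negative then additionally $\psi_1$ is positive and $\psi_2$ negative (occurrences may be both). An $A^+$-$A^-$-theory is a theory over $A^+\cup A^-$ in whose formulas every positive occurrence of an atom is in $A^+$ and every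 negative occurrence of an atom is in $A^-$ ($\bot$ unrestricted). $\Gamma_1,\Gamma_2$ are relativized hyperequivalent w.r.t. $A^+,A^-$ iff for every $A^+$-$A^-$-theory $\Gamma$, $\Gamma_1\cup\Gamma$ and $\Gamma_2\cup\Gamma$ have the same answer sets. For a set $X$ and $A$, $X|_A=X\cap A$. $E_s(\Gamma)$ is the set of HT-interpretations that are total HT-models of $\Gamma$ or here-countermodels of $\Gamma$ ($(X,Y)\not\models\Gamma$ and $Y\models\Gamma$). $(X,Y)$ is closed in a set $S$ if $(X',Y)\in S$ for all $X\subseteq X'\subseteq Y$. $(Y,Y)$ is $A^+$-total (for $\Gamma$) iff $(Y|_{A^+},Y)$ is closed in $E_s(\Gamma)$. $(X,Y)$ is $A^+$-closed in $E_s(\Gamma)$ iff $(X',Y)\in E_s(\Gamma)$ for all $X'\subseteq Y$ with $X|_{A^+}\subseteq X'|_{A^+}$ and $X'|_{A^-}\subseteq X|_{A^-}$. $E^{A^+}_{A^-}(\Gamma)$ (HT-hyperequivalence interpretations) is the set of HT-interpretations $(X,Y)$ such that $(Y,Y)$ is $A^+$-total and there is $X'\subseteq Y$ with $X=X'|_{A^+\cup A^-}$ and $(X',Y)$ $A^+$-closed in $E_s(\Gamma)$. *)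

(* Defs.v *)
From Stdlib Require Import Bool.

Set Implicit Arguments.

Section Syntax.
Variable Atom : Type.

Inductive form : Type :=
| Atm : Atom -> form
| Bot : form
| And : form -> form -> form
| Or  : form -> form -> form
| Imp : form -> form -> form.

Definition aset := Atom -> Prop.
Definition theory := form -> Prop.

Definition subset (X Y : aset) : Prop := forall a, X a -> Y a.
Definition seteq (X Y : aset) : Prop := forall a, X a <-> Y a.
Definition psubset (X Y : aset) : Prop := subset X Y /\ ~ subset Y X.
Definition inter (X Y : aset) : aset := fun a => X a /\ Y a.
Definition union (X Y : aset) : aset := fun a => X a \/ Y a.

Definition Lstar (L Ap Am : aset) : aset := fun a => L a \/ Ap a \/ Am a.

Fixpoint atom_in (a : Atom) (f : form) : Prop :=
  match f with
  | Atm b => b = a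
  | Bot => False
  | And g h | Or g h | Imp g h => atom_in a g \/ atom_in a h
  end.

Definition theory_over (G : theory) (S : aset) : Prop :=
  forall f, G f -> forall a, atom_in a f -> S a.

Fixpoint csat (Y : aset) (f : form) : Prop :=
  match f with
  | Atm a => Y a
  | Bot => False
  | And g h => csat Y g /\ csat Y h
  | Or g h => csat Y g \/ csat Y h
  | Imp g h => csat Y g -> csat Y h
  end.

Fixpoint htsat (X Y : aset) (f : form) : Prop :=
  match f with
  | Atm a => X a
  | Bot => False
  | And g h => htsat X Y g /\ htsat X Y h
  | Or g h => htsat X Y g \/ htsat X Y h
  | Imp g h => (htsat X Y g -> htsat X Y h) /\ csat Y (Imp g h)
  end.

Definition ctheory (Y : aset) (G : theory) : Prop := forall f, G f -> csat Y f.
Definition httheory (X Y : aset) (G : theory) : Prop := forall f, G f -> htsat X Y f.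

Definition htinterp (Ls X Y : aset) : Prop := subset X Y /\ subset Y Ls.

Definition answer_set (Ls : aset) (G : theory) (Y : aset) : Prop :=
  subset Y Ls /\ httheory Y Y G /\
  forall X, psubset X Y -> ~ httheory X Y G.

(* Polarity of atom occurrences.  [occ p n f a pol]: the formula occurrence f,
   whose own polarity is positive iff p and negative iff n, contains an
   occurrence of atom a of polarity pol (true = positive, false = negative). *)
Fixpoint occ (p n : bool) (f : form) (a : Atom) (pol : bool) : Prop :=
  match f with
  | Atm b => b = a /\ (if pol then p else n) = true
  | Bot => False
  | And g h | Or g h => occ p n g a pol \/ occ p n h a pol
  | Imp g h => occ n true g a pol \/ occ true n h a pol
  end.

Definition pos_occ (a : Atom) (f : form) : Prop := occ true false f a true.
Definition neg_occ (a : Atom) (f : form) : Prop := occ true false f a false.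

Definition ApAm_theory (Ap Am : aset) (G : theory) : Prop :=
  theory_over G (union Ap Am) /\
  forall f, G f -> forall a, (pos_occ a f -> Ap a) /\ (neg_occ a f -> Am a).

Definition tunion (G1 G2 : theory) : theory := fun f => G1 f \/ G2 f.

Definition rel_hyperequiv (L Ap Am : aset) (G1 G2 : theory) : Prop :=
  forall G, ApAm_theory Ap Am G ->
    forall Y, answer_set (Lstar L Ap Am) (tunion G1 G) Y <->
              answer_set (Lstar L Ap Am) (tunion G2 G) Y.

Definition Es (Ls : aset) (G : theory) (X Y : aset) : Prop :=
  htinterp Ls X Y /\
  ((seteq X Y /\ httheory Y Y G) \/ (~ httheory X Y G /\ ctheory Y G)).

Definition closed_in (S : aset -> aset -> Prop) (X Y : aset) : Prop :=
  forall X', subset X X' -> subset X' Y -> S X' Y.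

Definition Ap_total (Ls Ap : aset) (G : theory) (Y : aset) : Prop :=
  closed_in (Es Ls G) (inter Y Ap) Y.

Definition Ap_closed (Ls Ap Am : aset) (G : theory) (X Y : aset) : Prop :=
  forall X', subset X' Y ->
    subset (inter X Ap) (inter X' Ap) ->
    subset (inter X' Am) (inter X Am) ->
    Es Ls G X' Y.

Definition EAA (L Ap Am : aset) (G : theory) (X Y : aset) : Prop :=
  let Ls := Lstar L Ap Am in
  htinterp Ls X Y /\
  Ap_total Ls Ap G Y /\
  exists X', subset X' Y /\ seteq X (inter X' (union Ap Am)) /\
             Ap_closed Ls Ap Am G X' Y.

End Syntax.

(* Main.v *)
Require Import Defs.
From Stdlib Require Import Classical Bool.
Set Implicit Arguments.

Section Proofs.
Variable Atom : Type.
Implicit Types (X Y W Z : aset Atom) (G : theory Atom).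

Lemma htsat_YY Y f : htsat Y Y f <-> csat Y f.
Proof.
  induction f; simpl; try tauto.
Qed.

Lemma mono f : forall p n X X' Y,
  (forall a, occ p n f a true -> X a -> X' a) ->
  (forall a, occ p n f a false -> X' a -> X a) ->
  (p = true -> htsat X Y f -> htsat X' Y f) /\
  (n = true -> htsat X' Y f -> htsat X Y f).
Proof.
  induction f; intros p n X X' Y HP HN; simpl in *.
  - split; intros Hp Hx.
    + apply (HP a); auto.
    + apply (HN a); auto.
  - tauto.
  - destruct (IHf1 p n X X' Y) as [A1 B1]; [intros; apply HP; auto | intros; apply HN; auto|].
    destruct (IHf2 p n X X' Y) as [A2 B2]; [intros; apply HP; auto | intros; apply HN; auto|].
    split; intros Hp [H1 H2]; split; auto.
  - destruct (IHf1 p n X X' Y) as [A1 B1]; [intros; apply HP; auto | intros; apply HN; auto|].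
    destruct (IHf2 p n X X' Y) as [A2 B2]; [intros; apply HP; auto | intros; apply HN; auto|].
    split; intros Hp [H1|H2]; auto.
  - destruct (IHf1 n true X X' Y) as [A1 B1]; [intros; apply HP; auto | intros; apply HN; auto|].
    destruct (IHf2 true n X X' Y) as [A2 B2]; [intros; apply HP; auto | intros; apply HN; auto|].
    split; intros Hp [H1 H2]; split; auto.
Qed.

Lemma theory_mono Ap Am G X X' Y :
  ApAm_theory Ap Am G -> httheory X Y G ->
  subset (inter X Ap) (inter X' Ap) -> subset (inter X' Am) (inter X Am) ->
  httheory X' Y G.
Proof.
  intros [_ HG] H S1 S2 f Hf.
  destruct (mono f true false X X' Y) as [A _].
  - intros a Ho Hx. assert (Ap a) by (apply (HG f Hf a); exact Ho).
    apply (S1 a); split; auto.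
  - intros a Ho Hx. assert (Am a) by (apply (HG f Hf a); exact Ho).
    apply (S2 a); split; auto.
  - apply A; auto.
Qed.

Definition Gam (Ap Am : aset Atom) Y X : theory Atom := fun f =>
  (exists a, Ap a /\ X a /\ f = Atm a) \/
  (exists a b, Am a /\ Y a /\ ~ X a /\ Ap b /\ Y b /\ f = Imp (Atm a) (Atm b)).

Lemma Gam_ApAm Ap Am Y X : ApAm_theory Ap Am (Gam Ap Am Y X).
Proof.
  split.
  - intros f [[a [Ha [_ ->]]]|[a [b [Ha [_ [_ [Hb [_ ->]]]]]]]] c Hc; simpl in Hc.
    + subst; left; auto.
    + destruct Hc as [->| ->]; [right|left]; auto.
  - intros f [[a [Ha [_ ->]]]|[a [b [Ha [_ [_ [Hb [_ ->]]]]]]]] c; unfold pos_occ, neg_occ; simpl.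
    + split; intros [-> E]; auto; discriminate.
    + split; intros [[-> E]|[-> E]]; auto; discriminate.
Qed.

Lemma gam_sat Ap Am Y X W :
  (forall a, Ap a -> X a -> W a) ->
  (forall a b, Am a -> Y a -> ~ X a -> Ap b -> Y b -> W a -> W b) ->
  httheory W Y (Gam Ap Am Y X).
Proof.
  intros H1 H2 f [[a [Ha [Hx ->]]]|[a [b [Ha [Hy [Hx [Hb [Hyb ->]]]]]]]]; simpl.
  - auto.
  - split; eauto.
Qed.

Lemma gam_inv1 Ap Am Y X W a :
  httheory W Y (Gam Ap Am Y X) -> Ap a -> X a -> W a.
Proof.
  intros H Ha Hx. apply (H (Atm a)). left; eauto.
Qed.

Lemma gam_inv2 Ap Am Y X W a b :
  httheory W Y (Gam Ap Am Y X) -> Am a -> Y a -> ~ X a -> Ap b -> Y b -> W a -> W b.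
Proof.
  intros H Ha Hy Hx Hb Hyb Hw. apply (H (Imp (Atm a) (Atm b))); auto.
  right; exists a, b; auto 10.
Qed.

Lemma es_total Ls G Y X : Es Ls G X Y -> seteq X Y -> httheory Y Y G.
Proof.
  intros [_ [[_ H]|[H1 H2]]] Hs; auto.
  exfalso; apply H1; intros f Hf.
  assert (htsat Y Y f) by (apply htsat_YY; auto).
  destruct (mono f true true Y X Y) as [B _].
  - intros a _ Ha; apply Hs; auto.
  - intros a _ Ha; apply Hs; auto.
  - apply B; auto.
Qed.

Lemma es_strict Ls G W Y : Es Ls G W Y -> psubset W Y -> ~ httheory W Y G.
Proof.
  intros [_ [[Hs _]|[H _]]] [_ Hn]; auto.
  exfalso; apply Hn; intros a; apply Hs.
Qed.

Lemma ctheory_of Y G : httheory Y Y G -> ctheory Y G.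
Proof. intros H f Hf; apply htsat_YY; auto. Qed.

Lemma union_sat W Y G1 G2 : httheory W Y G1 -> httheory W Y G2 -> httheory W Y (tunion G1 G2).
Proof. intros A B f [Hf|Hf]; auto. Qed.

Lemma es_build Ls G W Y : subset W Y -> subset Y Ls -> httheory Y Y G ->
  (psubset W Y -> ~ httheory W Y G) -> Es Ls G W Y.
Proof.
  intros S1 S2 HY Hn. split; [split; auto|].
  destruct (classic (subset Y W)) as [S|S].
  - left; split; auto. intros a; split; auto.
  - right; split; [apply Hn; split; auto | apply ctheory_of; auto].
Qed.

Lemma total_Y Ls Ap G Y : Ap_total Ls Ap G Y -> subset Y Ls /\ httheory Y Y G.
Proof.
  intros H. assert (E : Es Ls G Y Y).
  { apply H; intros a; [intros [? ?]; auto| auto]. }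
  split; [apply (proj2 (proj1 E)) | eapply es_total; [exact E | intros a; tauto]].
Qed.

Lemma key Ls Ap Am G Y X0 : subset X0 Y -> Ap_total Ls Ap G Y -> Ap_closed Ls Ap Am G X0 Y ->
  answer_set Ls (tunion G (Gam Ap Am Y X0)) Y.
Proof.
  intros S0 HT HC. destruct (total_Y HT) as [SY HY].
  split; [auto|split].
  - apply union_sat; auto. apply gam_sat; auto.
  - intros W [SW NW] HW.
    assert (HWG : httheory W Y G) by (intros f Hf; apply HW; left; auto).
    assert (HWg : httheory W Y (Gam Ap Am Y X0)) by (intros f Hf; apply HW; right; auto).
    destruct (classic (exists a, Am a /\ Y a /\ ~ X0 a /\ W a)) as [[a [Ha [Hy [Hx Hw]]]]|Hne].
    + assert (E : Es Ls G W Y).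
      { apply HT; auto. intros b [Hb1 Hb2]. eapply gam_inv2; eauto. }
      exact (es_strict E (conj SW NW) HWG).
    + assert (E : Es Ls G W Y).
      { apply HC; auto.
        - intros b [Hb1 Hb2]; split; auto. eapply gam_inv1; eauto.
        - intros b [Hb1 Hb2]; split; auto. apply NNPP; intro Hx.
          apply Hne; exists b; auto. }
      exact (es_strict E (conj SW NW) HWG).
Qed.

Lemma total_closed Ls Ap Am G Y : Ap_total Ls Ap G Y -> Ap_closed Ls Ap Am G Y Y.
Proof.
  intros HT X' S1 S2 S3. apply HT; auto.
  intros a Ha. apply (S2 a Ha).
Qed.

Lemma dir1 L Ap Am G1 G2 :
  rel_hyperequiv L Ap Am G1 G2 ->
  forall X Y, EAA L Ap Am G1 X Y -> EAA L Ap Am G2 X Y.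
Proof.
  intros HR X Y [HI [HT [X' [SX' [Hseq HC]]]]].
  set (Ls := Lstar L Ap Am) in *.
  destruct (total_Y HT) as [SY HY].
  assert (A1 : answer_set Ls (tunion G2 (Gam Ap Am Y Y)) Y).
  { apply (HR _ (Gam_ApAm Ap Am Y Y)). apply key; auto.
    - intros a; auto.
    - apply total_closed; auto. }
  destruct A1 as [_ [HY2u M1]].
  assert (HY2 : httheory Y Y G2) by (intros f Hf; apply HY2u; left; auto).
  assert (A2 : answer_set Ls (tunion G2 (Gam Ap Am Y X')) Y).
  { apply (HR _ (Gam_ApAm Ap Am Y X')). apply key; auto. }
  destruct A2 as [_ [_ M2]].
  split; [auto|split].
  - intros W S1 S2. apply es_build; auto.
    intros Hp HW. apply (M1 W Hp). apply union_sat; auto.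
    apply gam_sat.
    + intros a Ha Hy. apply (S1 a); split; auto.
    + intros a b _ Hy Hn; contradiction.
  - exists X'; split; [auto|split; [auto|]].
    intros W S1 S2 S3. apply es_build; auto.
    intros Hp HW. apply (M2 W Hp). apply union_sat; auto.
    apply gam_sat.
    + intros a Ha Hx. apply (S2 a); split; auto.
    + intros a b Ha _ Hx _ _ Hw. exfalso; apply Hx. apply (S3 a); split; auto.
Qed.

Lemma as_closed Ls Ap Am G1 G Y X :
  ApAm_theory Ap Am G -> answer_set Ls (tunion G1 G) Y ->
  subset X Y -> httheory X Y G -> Ap_closed Ls Ap Am G1 X Y.
Proof.
  intros HA [SY [HY M]] SX HX W S1 S2 S3.
  assert (HWG : httheory W Y G) by (eapply theory_mono; eauto).
  apply es_build; auto.
  - intros f Hf; apply HY; left; auto.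
  - intros Hp HW. apply (M W Hp). apply union_sat; auto.
Qed.

Lemma dir2_half L Ap Am G1 G2 :
  (forall X Y, EAA L Ap Am G1 X Y -> EAA L Ap Am G2 X Y) ->
  forall G, ApAm_theory Ap Am G -> forall Y,
  answer_set (Lstar L Ap Am) (tunion G1 G) Y -> answer_set (Lstar L Ap Am) (tunion G2 G) Y.
Proof.
  intros HE G HA Y HAS.
  set (Ls := Lstar L Ap Am) in *.
  destruct HAS as [SY [HY M]].
  assert (HYG : httheory Y Y G) by (intros f Hf; apply HY; right; auto).
  assert (HAS : answer_set Ls (tunion G1 G) Y) by (split; auto).
  assert (CY : Ap_closed Ls Ap Am G1 Y Y) by (eapply as_closed; eauto; intros a; auto).
  assert (TY : Ap_total Ls Ap G1 Y).
  { intros X' S1 S2. apply CY; [exact S2| |].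
    - intros a [Ha Hb]; split; auto. apply S1; split; auto.
    - intros a [Ha Hb]; split; auto. }
  assert (E1 : EAA L Ap Am G1 (inter Y (union Ap Am)) Y).
  { split; [split; auto; intros a [? ?]; auto|split; auto].
    exists Y; split; [intros a; auto|split; auto]. intros a; tauto. }
  destruct (HE _ _ E1) as [_ [TY2 _]].
  destruct (total_Y TY2) as [_ HY2].
  split; [auto|split].
  - apply union_sat; auto.
  - intros W Hp HW.
    assert (HWG : httheory W Y G) by (intros f Hf; apply HW; right; auto).
    assert (CW : Ap_closed Ls Ap Am G1 W Y) by (eapply as_closed; eauto; apply (proj1 Hp)).
    assert (E2 : EAA L Ap Am G1 (inter W (union Ap Am)) Y).
    { split; [split; [intros a [? ?]; apply (proj1 Hp); auto | auto]|split; auto].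
      exists W; split; [apply (proj1 Hp)|split; auto]. intros a; tauto. }
    destruct (HE _ _ E2) as [_ [_ [X'' [SX'' [Hs C2]]]]].
    assert (E : Es Ls G2 W Y).
    { apply C2; [apply (proj1 Hp)| |].
      - intros a [Ha Hb]. assert (Hw : inter W (union Ap Am) a) by (apply Hs; split; [auto|left; auto]).
        split; [apply (proj1 Hw)|auto].
      - intros a [Ha Hb]. assert (Hw : inter X'' (union Ap Am) a) by (apply Hs; split; [auto|right; auto]).
        split; [apply (proj1 Hw)|auto]. }
    apply (es_strict E Hp). intros f Hf; apply HW; left; auto.
Qed.

End Proofs.

Theorem mainTheorem11 (Atom : Type) (L Ap Am : aset Atom) (G1 G2 : theory Atom)
  (H1 : theory_over G1 L) (H2 : theory_over G2 L) :
  rel_hyperequiv L Ap Am G1 G2 <->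
  (forall X Y : aset Atom, EAA L Ap Am G1 X Y <-> EAA L Ap Am G2 X Y).
Proof.
  split.
  - intros HR X Y; split; apply dir1; auto.
    intros G HG Y'; specialize (HR G HG Y'); tauto.
  - intros HE G HG Y; split; apply dir2_half; auto; intros X Y'; apply HE.
Qed.
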